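(* Let $k\geq 2$, $n=rk$ with $r>2$, $e=\lceil r/2\rceil-1$. Let $\mathcal{C}_1=\bigcup_{i=1}^{e(q-1)(q^k-1)}\{\alpha U_i\mid\alpha\in\mathbb{F}_{q^n}^*\}$, $\mathcal{C}_2=\bigcup_{j=1}^{e(q-1)}\{\alpha V_j\mid\alpha\in\mathbb{F}_{q^n}^*\}$, and $\mathcal{C}_3=\{\alpha\mathbb{F}_{q^k}\mid\alpha\in\mathbb{F}_{q^n}^*\}$. Then $\mathcal{C}=\mathcal{C}_1\cup\mathcal{C}_2\cup\mathcal{C}_3$ is a cyclic constant dimension subspace code with cardinality $eq^k(q^n-1)+\frac{q^n-1}{q^k-1}$ and minimum distance $2k-2$.
   Context: $q$ is a prime power, $\mathbb{F}_{q^n}$ the degree-$n$ extension of $\mathbb{F}_q$; subspace distance $d(U,V)=\dim U+\dim V-2\dim(U\cap V)$; a code is cyclic if it is a union of orbits $\{\alpha U\mid\alpha\in\mathbb{F}_{q^n}^*\}$. Let $\xi$ be a primitive element of $\mathbb{F}_{q^k}$ and $G=\mathbb{F}_{q^k}^*/\langle\xi^{q-1}\rangle$ (cyclic of order $q-1$, elements used via fixed coset representatives). Let $\gamma$ be a root of an irreducible polynomial of degree $r$ over $\mathbb{F}_{q^k}$. The $U_i=\{u+(\tau_iu^q+u)\delta_i\gamma^{l_i}\mid u\in\mathbb{F}_{q^k}\}$ range over all $e(q-1)(q^k-1)$ triples $(\tau_i,\delta_i,l_i)$ with $\tau_i\in G$, $\delta_i\in\mathbb{F}_{q^k}^*$,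 $1\le l_i\le e$; the $V_j=\{u+\eta_ju^q\gamma^{l_j}\mid u\in\mathbb{F}_{q^k}\}$ range over all $e(q-1)$ pairs $(\eta_j,l_j)$ with $\eta_j\in G$, $1\le l_j\le e$. (Separately, $\mathcal{C}_1$ has size $e(q^k-1)(q^n-1)$ and $\mathcal{C}_2$ has size $e(q^n-1)$, each with minimum distance $2k-2$.) *)

(* Defs.v *)
From HB Require Import structures.
From mathcomp Require Import all_boot all_order all_algebra all_field.
Set Implicit Arguments. Unset Strict Implicit. Unset Printing Implicit Defensive.
Import GRing.Theory.
Local Open Scope ring_scope.

Section SubspaceCodes.
Variables (F : finFieldType) (L : fieldExtType F).

Definition elems : seq L := enum (finvect_type L).

Definition nzelems (K : {vspace L}) : seq L :=
  [seq x <- elems | (x \in K) && (x != 0)].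

Definition kelems (K : {vspace L}) : seq L := [seq x <- elems | x \in K].

Definition mulsp (a : L) (V : {vspace L}) : {vspace L} := (<[a]> * V)%VS.

(* the orbit {alpha V | alpha in L^*} listed with repetitions *)
Definition orbit_sp (V : {vspace L}) : seq {vspace L} :=
  [seq mulsp a V | a <- elems & a != 0].

Definition sdist (U V : {vspace L}) : nat :=
  (\dim U + \dim V - 2 * \dim (U :&: V))%N.

(* a code (list of subspaces, viewed as a set) is cyclic: it is a union of
   orbits, i.e. closed under multiplication by nonzero scalars *)
Definition cyclic_code (C : seq {vspace L}) : Prop :=
  forall V a, V \in C -> a != 0 -> mulsp a V \in C.

Definition const_dim_code (C : seq {vspace L}) (k : nat) : Prop :=
  forall V, V \in C -> \dim V = k.

Definition min_dist (C : seq {vspace L}) (d : nat) : Prop :=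
  (forall U V, U \in C -> V \in C -> U != V -> (d <= sdist U V)%N) /\
  exists U V, [/\ U \in C, V \in C, U != V & sdist U V = d].

(* the set {f u | u in K}, as an F-subspace (its span; it is itself a
   subspace since f is F_q-linear) *)
Definition image_sp (K : {vspace L}) (f : L -> L) : {vspace L} :=
  (<<[seq f u | u <- kelems K]>>)%VS.

Definition Usp (K : {vspace L}) (gamma tau delta : L) (l : nat) :=
  image_sp K (fun u => u + (tau * u ^+ #|F| + u) * delta * gamma ^+ l).

Definition Vsp (K : {vspace L}) (gamma eta : L) (l : nat) :=
  image_sp K (fun u => u + eta * u ^+ #|F| * gamma ^+ l).

(* C1, C2, C3 listed as unions of orbits; rep gives the fixed coset
   representatives of G, e is the range bound of l *)
Definition code1 (K : {vspace L}) (gamma : L) (rep : 'I_(#|F|.-1) -> L)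
  (e : nat) : seq {vspace L} :=
  flatten [seq orbit_sp (Usp K gamma (rep td.1) td.2 l)
          | td <- [seq (t, d) | t <- enum 'I_(#|F|.-1), d <- nzelems K],
            l <- iota 1 e].

Definition code2 (K : {vspace L}) (gamma : L) (rep : 'I_(#|F|.-1) -> L)
  (e : nat) : seq {vspace L} :=
  flatten [seq orbit_sp (Vsp K gamma (rep t) l)
          | t <- enum 'I_(#|F|.-1), l <- iota 1 e].

Definition code3 (K : {vspace L}) : seq {vspace L} := orbit_sp K.

End SubspaceCodes.

(* Main.v *)
Require Import Defs.
From HB Require Import structures.
From mathcomp Require Import all_boot all_order all_algebra all_field.
From mathcomp Require Import zify ring.
Import GRing.Theory.
Local Open Scope ring_scope.

Set Implicit Arguments. Unset Strict Implicit. Unset Printing Implicit Defensive.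

Section Frob.
Variables (F : finFieldType) (L : fieldExtType F).
Local Notation q := #|F|.

Lemma q_pnat : [pchar L].-nat q.
Proof.
have [p pp pF] := finPcharP F.
have := card_pprimeChar pF. rewrite /= => ->.
rewrite pnatX; apply/orP; left.
by rewrite pnatE // (pchar_lalg L).
Qed.

Lemma frobD (x y : L) : (x + y) ^+ q = x ^+ q + y ^+ q.
Proof. exact: exprDn_pchar q_pnat. Qed.

Lemma frobZ (c : F) (x : L) : (c *: x) ^+ q = c *: x ^+ q.
Proof. by rewrite exprZn expf_card. Qed.

Lemma memF (x : L) : (x \in 1%VS) = (x ^+ q == x).
Proof. by rewrite (Fermat's_little_theorem 1%AS x) dimv1 expn1. Qed.

Lemma memK (K : {subfield L}) (x : L) : (x \in K) = (x ^+ (q ^ \dim K) == x).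
Proof. exact: Fermat's_little_theorem. Qed.
End Frob.
Section Indep.
Variables (F : finFieldType) (L : fieldExtType F) (K : {subfield L}) (r : nat) (gamma : L).
Hypothesis hmin : size (minPoly K gamma) = r.+1.

Lemma poly_indep (P : {poly L}) : P \is a polyOver K -> (size P <= r)%N -> P.[gamma] = 0 -> P = 0.
Proof.
move=> PK sP r0; apply/eqP; apply: contraT => Pn0.
have := dvdp_leq Pn0 (minPoly_dvdp PK (introT rootP r0)); rewrite hmin => H; have := leq_ltn_trans sP H; by rewrite ltnn.
Qed.

Lemma IL (A B C D : L) (a b : nat) : A \in K -> B \in K -> C \in K -> D \in K ->
  (1 <= a)%N -> (1 <= b)%N -> (a + b < r)%N ->
  A + B * gamma ^+ a + C * gamma ^+ b + D * gamma ^+ (a + b) = 0 ->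
  [/\ A = 0, D = 0 & if a == b then B + C = 0 else B = 0 /\ C = 0].
Proof.
move=> AK BK CK DK a1 b1 abr E.
pose P : {poly L} := A%:P + B *: 'X^a + C *: 'X^b + D *: 'X^(a + b).
have PK : P \is a polyOver K.
  by rewrite !rpredD ?polyOverC ?polyOverZ ?polyOverXn.
have sP : (size P <= r)%N.
  apply: (@leq_trans (a + b).+1); last by [].
  apply/leq_sizeP => j hj.
  rewrite /P !coefD !coefZ !coefXn coefC.
  have -> : (j == 0)%N = false by apply/negbTE; lia.
  have -> : (j == a)%N = false by apply/negbTE; lia.
  have -> : (j == b)%N = false by apply/negbTE; lia.
  have -> : (j == a + b)%N = false by apply/negbTE; lia.
  by rewrite !mulr0 !addr0.
have P0 : P = 0.
  apply: poly_indep => //.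
  by rewrite /P !hornerE.
have cP i : P`_i = 0 by rewrite P0 coef0.
have h0 := cP 0%N; have hab := cP (a + b)%N; have ha := cP a; have hb := cP b.
rewrite /P !coefD !coefZ !coefXn !coefC in h0 hab ha hb.
have nf (m n : nat) : m <> n -> (m == n)%N = false by move=> h; apply/eqP.
move: h0 hab ha hb.
rewrite (nf 0%N a) ?(nf 0%N b) ?(nf 0%N (a+b)%N) ?(nf (a+b)%N 0%N) ?(nf (a+b)%N a) ?(nf (a+b)%N b)
  ?(nf a 0%N) ?(nf b 0%N) ?(nf a (a+b)%N) ?(nf b (a+b)%N); try lia.
rewrite !eqxx /= !mulr0 !mulr1 !addr0 !add0r => -> -> ha hb.
split=> //.
case: eqP ha hb => [<-|/eqP ab]; first by rewrite eqxx /= mulr1.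
by rewrite eq_sym (negbTE ab) /= !mulr0 addr0 add0r => -> ->.
Qed.
End Indep.


Section Graph.
Variables (F : finFieldType) (L : fieldExtType F).
Local Notation q := #|F|.

Definition gfun (gamma : L) (a : nat) (s t : L) (u : L) : L :=
  u + (s * u ^+ q + t * u) * gamma ^+ a.

Lemma gfun_lin gamma a s t : linear (gfun gamma a s t).
Proof.
move=> c u v; rewrite /gfun (frobD (c *: u) v) (frobZ c u).
have E (x : L) : c *: x = c%:A * x by rewrite mulr_algl.
rewrite [c *: u]E [c *: u ^+ _]E [c *: (u + _)]E; ring.
Qed.

HB.instance Definition _ gamma a s t :=
  GRing.isLinear.Build F L L *:%R (gfun gamma a s t) (gfun_lin gamma a s t).

Lemma mem_elems (x : L) : x \in elems L.
Proof. exact: (@mem_enum (finvect_type L) (finvect_type L) x). Qed.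

Lemma image_sp_ext (K : {vspace L}) (f g : L -> L) : f =1 g -> image_sp K f = image_sp K g.
Proof. by move=> fg; rewrite /image_sp (eq_map fg). Qed.

Lemma image_spE (K : {vspace L}) (f : {linear L -> L}) :
  image_sp K f = (linfun f @: K)%VS.
Proof.
apply/eqP; rewrite eqEsubv; apply/andP; split.
  apply/span_subvP => y /mapP [u]; rewrite mem_filter => /andP [uK _] ->.
  by rewrite -lfunE memv_img.
apply/subvP => y /memv_imgP [u uK ->]; rewrite lfunE.
by apply: memv_span; apply: map_f; rewrite mem_filter uK mem_elems.
Qed.

Lemma mem_gsp (K : {vspace L}) gamma a s t x :
  reflect (exists2 u, u \in K & x = gfun gamma a s t u)
          (x \in image_sp K (gfun gamma a s t)).
Proof.
rewrite (image_spE K (gfun gamma a s t)).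
by apply: (iffP memv_imgP) => [] [u uK ->]; exists u; rewrite ?lfunE.
Qed.

End Graph.


Section Basic.
Variables (F : finFieldType) (L : fieldExtType F).
Local Notation q := #|F|.

Lemma q_gt0 : (0 < q)%N.
Proof. by apply/card_gt0P; exists 0. Qed.

Lemma exp0q : (0 : L) ^+ q = 0.
Proof. by rewrite expr0n; case: q q_gt0. Qed.

Lemma mem_mulsp (a : L) (V : {vspace L}) x :
  reflect (exists2 u, u \in V & x = u * a) (x \in mulsp a V).
Proof. rewrite /mulsp prodvC; exact: memv_cosetP. Qed.

Lemma dim_mulsp (a : L) V : a != 0 -> \dim (mulsp a V) = \dim V.
Proof. by move=> a0; rewrite /mulsp prodvC dim_cosetv. Qed.

Lemma mulspM (a b : L) V : mulsp a (mulsp b V) = mulsp (a * b) V.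
Proof. by rewrite /mulsp prodvA prodv_line. Qed.

Lemma mulsp1 V : mulsp (1 : L) V = V.
Proof. by rewrite /mulsp prod1v. Qed.

Lemma gfun0 gamma a s t : gfun gamma a s t (0 : L) = 0.
Proof. by rewrite /gfun exp0q !mulr0 addr0 mul0r addr0. Qed.

Lemma memFP (x : L) : reflect (exists c : F, x = c%:A) (x \in 1%VS).
Proof. exact: vlineP. Qed.

End Basic.

Section Main.
Variables (F : finFieldType) (L : fieldExtType F) (K : {subfield L}) (r : nat) (gamma : L).
Hypothesis hmin : size (minPoly K gamma) = r.+1.
Local Notation q := #|F|.
Local Notation G a s t := (image_sp K (gfun gamma a s t)).

Lemma dim_gsp a s t : (1 <= a)%N -> (a + a < r)%N -> s \in K -> t \in K ->
  \dim (G a s t) = \dim K.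
Proof.
move=> a1 ar sK tK; rewrite image_spE limg_dim_eq //.
apply/eqP; rewrite -subv0; apply/subvP => u; rewrite memv_cap memv_ker lfunE /=.
case/andP => uK /eqP; rewrite memv0 /gfun => E.
have := @IL F L K r gamma hmin u (s * u ^+ q + t * u) 0 0 a a uK.
rewrite rpredD ?rpredM ?rpredX ?rpred0 // => /(_ isT isT isT a1 a1 ar).
rewrite !mul0r !addr0 => /(_ E) [-> _ _]; by [].
Qed.

Lemma G100 : G 1 0 0 = K.
Proof.
apply/vspaceP => x; apply/idP/idP.
  by case/mem_gsp => u uK ->; rewrite /gfun !mul0r add0r mul0r addr0.
move=> xK; apply/mem_gsp; exists x => //.
by rewrite /gfun !mul0r add0r mul0r addr0.
Qed.


Lemma ML a b s t s' t' (beta beta' z1 z2 : L) :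
  (1 <= a)%N -> (1 <= b)%N -> (a + b < r)%N ->
  s \in K -> t \in K -> s' \in K -> t' \in K ->
  (s = 0 -> t = 0) -> (s' = 0 -> t' = 0) -> beta != 0 -> beta' != 0 ->
  z1 \in mulsp beta (G a s t) -> z2 \in mulsp beta (G a s t) ->
  z1 \in mulsp beta' (G b s' t') -> z2 \in mulsp beta' (G b s' t') ->
  z2 != 0 -> z1 \notin <[z2]>%VS ->
  [/\ (s == 0) = (s' == 0), s != 0 -> a = b /\ t = t' &
      exists w, [/\ w \in K, w != 0, s' * w = s * w ^+ q & beta' = beta * w]].
Proof.
move=> a1 b1 abr sK tK s'K t'K st s't' bn bn' Z1 Z2 Z1' Z2' z2n z1n.
case/mem_mulsp: Z1 => _ /mem_gsp [u1 u1K ->] z1E.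
case/mem_mulsp: Z2 => _ /mem_gsp [u2 u2K ->] z2E.
case/mem_mulsp: Z1' => _ /mem_gsp [v1 v1K ->] z1E'.
case/mem_mulsp: Z2' => _ /mem_gsp [v2 v2K ->] z2E'.
have u2n : u2 != 0.
  by apply: contraNneq z2n => u20; rewrite z2E u20 gfun0 mul0r.
have v2n : v2 != 0.
  by apply: contraNneq z2n => v20; rewrite z2E' v20 gfun0 mul0r.
have Y2n : gfun gamma b s' t' v2 != 0.
  by apply: contraNneq z2n => y0; rewrite z2E' y0 mul0r.
have cross : gfun gamma a s t u1 * gfun gamma b s' t' v2 =
             gfun gamma a s t u2 * gfun gamma b s' t' v1.
  apply: (mulIf (mulf_neq0 bn bn')).
  have e1 : gfun gamma a s t u1 * gfun gamma b s' t' v2 * (beta * beta') = z1 * z2.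
    by rewrite z1E z2E'; ring.
  have e2 : gfun gamma a s t u2 * gfun gamma b s' t' v1 * (beta * beta') = z1 * z2.
    by rewrite z1E' z2E; ring.
  by rewrite e1 e2.
pose S1 := s * u1 ^+ q + t * u1; pose S2 := s * u2 ^+ q + t * u2.
pose T1 := s' * v1 ^+ q + t' * v1; pose T2 := s' * v2 ^+ q + t' * v2.
have E : (u1 * v2 - u2 * v1) + (S1 * v2 - S2 * v1) * gamma ^+ a +
         (u1 * T2 - u2 * T1) * gamma ^+ b + (S1 * T2 - S2 * T1) * gamma ^+ (a + b) = 0.
  move: cross; rewrite /gfun exprD => /eqP; rewrite -subr_eq0 => /eqP <-.
  rewrite /S1 /S2 /T1 /T2; ring.
have inK x y : x \in K -> y \in K -> x * y \in K by move=> *; rewrite rpredM.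
have S1K : S1 \in K by rewrite rpredD ?rpredM ?rpredX.
have S2K : S2 \in K by rewrite rpredD ?rpredM ?rpredX.
have T1K : T1 \in K by rewrite rpredD ?rpredM ?rpredX.
have T2K : T2 \in K by rewrite rpredD ?rpredM ?rpredX.
have := @IL F L K r gamma hmin _ _ _ _ a b _ _ _ _ a1 b1 abr E.
rewrite !rpredB ?rpredM // => /(_ isT isT isT isT) [hA hD hBC].
pose lam := u1 / u2.
have u1E : u1 = lam * u2 by rewrite /lam divfK.
have v1E : v1 = lam * v2.
  apply: (mulfI u2n); rewrite /lam.
  have -> : u2 * v1 = u1 * v2 by apply/esym/eqP; rewrite -subr_eq0 hA.
  by field.
have Dn : lam ^+ q != lam.
  apply/negP => /eqP lq.
  have : lam \in 1%VS by rewrite memF lq.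
  case/memFP => c lc.
  apply/negP: z1n; apply/negPn.
  have -> : z1 = c *: z2.
    rewrite z1E z2E u1E -[c *: _]mulr_algl -lc /gfun exprMn lq; ring.
  by rewrite memvZ ?memv_line.
pose D := lam ^+ q - lam.
have Dn0 : D != 0 by rewrite /D subr_eq0.
have hB : S1 * v2 - S2 * v1 = s * u2 ^+ q * D * v2.
  by rewrite /S1 /S2 /D u1E v1E exprMn; ring.
have hC : u1 * T2 - u2 * T1 = - (u2 * s' * v2 ^+ q * D).
  by rewrite /T1 /T2 /D u1E v1E exprMn; ring.
have hD' : S1 * T2 - S2 * T1 = D * (s * u2 ^+ q * T2 - s' * v2 ^+ q * S2).
  by rewrite /S1 /S2 /T1 /T2 /D u1E v1E !exprMn; ring.
have E3 : s * u2 ^+ q * T2 - s' * v2 ^+ q * S2 = 0.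
  by move: hD; rewrite hD' => /eqP; rewrite mulf_eq0 (negbTE Dn0) /= => /eqP.
have uqn : u2 ^+ q != 0 by rewrite expf_neq0.
have vqn : v2 ^+ q != 0 by rewrite expf_neq0.
pose w := u2 / v2.
have wK : w \in K by rewrite rpredM ?rpredV.
have wn : w != 0 by rewrite mulf_neq0 ?invr_eq0.
have wv : w * v2 = u2 by rewrite /w divfK.
have [hs [htt hsw hab]] : [/\ (s == 0) = (s' == 0), t = t', s' * w = s * w ^+ q &
                         (s != 0 -> a = b) /\ (a = b \/ (s = 0 /\ s' = 0))].
  case: eqP hBC => [ab | nab] hBC.
    subst b.
    have E2 : s * u2 ^+ q * v2 = s' * v2 ^+ q * u2.
      move: hBC; rewrite hB hC => /eqP.
      have -> : s * u2 ^+ q * D * v2 + - (u2 * s' * v2 ^+ q * D) =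
                D * (s * u2 ^+ q * v2 - s' * v2 ^+ q * u2) by ring.
      by rewrite mulf_eq0 (negbTE Dn0) /= subr_eq0 => /eqP.
    have hs : (s == 0) = (s' == 0).
      apply/eqP/eqP => [s0|s'0].
        by move: E2; rewrite s0 !mul0r => /esym/eqP; rewrite !mulf_eq0 (negbTE vqn) (negbTE u2n) !orbF => /eqP.
      by move: E2; rewrite s'0 !mul0r => /eqP; rewrite !mulf_eq0 (negbTE uqn) (negbTE v2n) !orbF => /eqP.
    have htt : t = t'.
      case: (eqVneq s 0) => [s0|sn].
        by rewrite (st s0) s't' //; apply/eqP; rewrite -hs s0.
      pose W := s * u2 ^+ q * v2.
      have Wn : W != 0 by rewrite /W !mulf_neq0.
      apply: (mulIf Wn); apply/eqP; rewrite -subr_eq0; apply/eqP.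
      have -> : t * W - t' * W = - (s * u2 ^+ q * T2 - s' * v2 ^+ q * S2) +
                t * (s * u2 ^+ q * v2 - s' * v2 ^+ q * u2).
        by rewrite /W /S2 /T2; ring.
      by rewrite E3 E2 subrr oppr0 mulr0 addr0.
    split => //; last by split => //; left.
    rewrite /w expr_div_n; apply/eqP; rewrite -subr_eq0; apply/eqP.
    have -> : s' * (u2 / v2) - s * (u2 ^+ q / v2 ^+ q) =
              (s' * v2 ^+ q * u2 - s * u2 ^+ q * v2) / (v2 ^+ q * v2).
      by field; rewrite v2n vqn.
    by rewrite E2 subrr mul0r.
  have s0 : s = 0.
    case: hBC => h _; move: h; rewrite hB => /eqP.
    by rewrite !mulf_eq0 (negbTE Dn0) (negbTE uqn) (negbTE v2n) !orbF => /eqP.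
  have s'0 : s' = 0.
    case: hBC => _; rewrite hC => /eqP; rewrite oppr_eq0.
    by rewrite !mulf_eq0 (negbTE Dn0) (negbTE vqn) (negbTE u2n) !orbF => /eqP.
  split; first by rewrite s0 s'0 !eqxx.
  - by rewrite (st s0) (s't' s'0).
  - by rewrite s0 s'0 !mul0r.
  by split; [rewrite s0 eqxx | right].
clearbody w.
have X2E : gfun gamma a s t u2 = w * gfun gamma b s' t' v2.
  case: hab => _ [ab | [s0 s'0]].
    subst b; rewrite /gfun htt.
    have sw : s' * w * v2 ^+ q = s * u2 ^+ q by rewrite hsw -wv exprMn; ring.
    rewrite -{1 3}wv -sw; ring.
  rewrite /gfun s0 s'0 (st s0) (s't' s'0) !mul0r !add0r !mul0r !addr0; by rewrite wv.
split => //.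
  by move=> sn; case: hab => /(_ sn) ab _.
exists w; split => //.
apply: (mulfI Y2n); rewrite -z2E' z2E X2E; ring.
Qed.

End Main.


Section SeqCount.
Local Open Scope nat_scope.
Variables (A B : eqType).

Lemma count_in_sum (f : A -> B) (s : seq A) (t : seq B) : uniq t ->
  count (fun x => f x \in t) s = sumn [seq count (fun x => f x == y) s | y <- t].
Proof.
elim: t => [|y t IH] /=; first by rewrite count_pred0.
case/andP => yt ut; rewrite -IH //.
rewrite -(count_predUI (fun x => f x == y) (fun x => f x \in t)).
have -> : count (predI (fun x => f x == y) (fun x => f x \in t)) s = 0.
  apply/eqP; rewrite -leqn0 leqNgt -has_count; apply/hasPn => x _ /=.
  by apply/negP => /andP [/eqP -> ]; rewrite (negbTE yt).
rewrite addn0; apply: eq_count => x /=; by rewrite in_cons.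
Qed.

Lemma undup_map_size (f : A -> B) (s : seq A) (m : nat) :
  (forall x, x \in s -> count (fun y => f y == f x) s = m) ->
  size (undup (map f s)) * m = size s.
Proof.
move=> hm.
have -> : size s = count (fun x => f x \in undup (map f s)) s.
  rewrite -[LHS]count_predT; apply: eq_in_count => x xs.
  by rewrite mem_undup map_f.
rewrite count_in_sum ?undup_uniq //.
have -> : [seq count (fun x => f x == y) s | y <- undup (map f s)] =
          [seq m | y <- undup (map f s)].
  apply/eq_in_map => y; rewrite mem_undup => /mapP [x xs ->]; exact: hm.
by elim: (undup (map f s)) => //= y t <-; rewrite mulSn.
Qed.

Lemma sumn_const (T : Type) (t : seq T) (m : nat) : sumn [seq m | _ <- t] = size t * m.
Proof. by elim: t => //= y t ->; rewrite mulSn. Qed.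

Lemma size_undup_flatten (I : eqType) (ps : seq I) (f : I -> seq B) :
  uniq ps ->
  (forall p p' x, p \in ps -> p' \in ps -> x \in f p -> x \in f p' -> p = p') ->
  size (undup (flatten (map f ps))) = sumn [seq size (undup (f p)) | p <- ps].
Proof.
elim: ps => [|p ps IH] //= /andP [pps ups] hd.
rewrite undup_cat size_cat IH //; last first.
  by move=> a b x ha hb; apply: hd; rewrite in_cons ?ha ?hb orbT.
congr (_ + _); congr size; apply/all_filterP/allP => x; rewrite mem_undup => xp.
apply/negP => /flattenP [s /mapP [p' p'ps ->] xp'].
have pp' : p = p' by apply: (hd p p' x); rewrite ?in_cons ?eqxx ?p'ps ?orbT.
by move: pps; rewrite pp' p'ps.
Qed.

End SeqCount.


Section Helpers.
Variables (F : finFieldType) (L : fieldExtType F).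
Local Notation q := #|F|.

Lemma mulsp_stab (V : {vspace L}) (w : L) : w \in 1%VS -> w != 0 -> mulsp w V = V.
Proof.
move=> wF wn; apply/eqP; rewrite eqEdim dim_mulsp // leqnn andbT.
apply/subvP => x /mem_mulsp [u uV ->].
by case/memFP: wF => c ->; rewrite mulr_algr memvZ.
Qed.

Lemma mulsp_stabK (K : {subfield L}) (w : L) : w \in K -> w != 0 -> mulsp w K = K.
Proof.
move=> wK wn; apply/eqP; rewrite eqEdim dim_mulsp // leqnn andbT.
by apply/subvP => x /mem_mulsp [u uK ->]; rewrite rpredM.
Qed.

Lemma two_elems (X : {vspace L}) : (2 <= \dim X)%N ->
  exists z1 z2, [/\ z1 \in X, z2 \in X, z2 != 0 & z1 \notin <[z2]>%VS].
Proof.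
move=> d2; have Xn : X != 0%VS.
  by rewrite -dimv_eq0; apply/eqP => d0; rewrite d0 in d2.
set z2 := vpick X.
have z2n : z2 != 0 by rewrite vpick0.
have : ~~ (X <= <[z2]>)%VS.
  apply/negP => /dimvS; rewrite dim_vline z2n => h.
  by have := leq_trans d2 h.
case/subvPn => z1 z1X z1n; exists z1, z2; split => //; exact: memv_pick.
Qed.

Lemma count_elems (P : pred L) :
  count P (elems L) = #|[pred x : finvect_type L | P x]|.
Proof. by rewrite cardE /elems enumT /enum_mem size_filter. Qed.

Lemma card_nz (V : {vspace L}) :
  #|[pred x : finvect_type L | (x \in V) && (x != 0)]| = (q ^ \dim V).-1.
Proof.
have := card_vspace (V : {vspace finvect_type L}).
rewrite (cardD1 0) rpred0 /= => <-.
by apply: eq_card => x; rewrite !inE andbC.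
Qed.

Lemma card_L : #|finvect_type L| = (q ^ \dim {:L}%VS)%N.
Proof.
rewrite -(card_vspace ({:L}%VS : {vspace finvect_type L})).
by apply: eq_card => x; rewrite memvf.
Qed.

End Helpers.

Section Code.
Variables (F : finFieldType) (L : fieldExtType F) (K : {subfield L})
  (k r : nat) (xi gamma : L) (rep : 'I_(#|F|.-1) -> L).
Local Notation q := #|F|.
Hypotheses (hk : (2 <= k)%N) (hr : (2 < r)%N) (hdK : \dim K = k)
  (hdL : \dim {: L}%VS = (r * k)%N) (hxi : xi \in K)
  (hprim : (q ^ k).-1.-primitive_root xi)
  (hrep : forall t, rep t \in K /\ rep t != 0)
  (hrepd : forall t s, t != s -> ~ exists m : nat, rep t = rep s * xi ^+ (q.-1 * m))
  (hmin : size (minPoly K gamma) = r.+1).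

Local Notation e := (uphalf r).-1.
Local Notation G a s t := (image_sp K (gfun gamma a s t)).

Lemma e_bound : (e + e < r)%N.
Proof. move: (odd_double_half r) hr; rewrite uphalf_half -addnn; case: (odd r) => /=; lia. Qed.

Lemma e_ge1 : (1 <= e)%N.
Proof. move: (odd_double_half r) hr; rewrite uphalf_half -addnn; case: (odd r) => /=; lia. Qed.

Definition prm := ((('I_(q.-1) * L) * nat) + ('I_(q.-1) * nat) + unit)%type.

Definition base (p : prm) : {vspace L} :=
  match p with
  | inl (inl (td, l)) => Usp K gamma (rep td.1) td.2 l
  | inl (inr (t, l)) => Vsp K gamma (rep t) l
  | inr _ => K
  end.
Definition tr_a (p : prm) : nat :=
  match p with inl (inl (_, l)) => l | inl (inr (_, l)) => l | inr _ => 1%N end.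
Definition tr_s (p : prm) : L :=
  match p with inl (inl (td, _)) => rep td.1 * td.2 | inl (inr (t, _)) => rep t | inr _ => 0 end.
Definition tr_t (p : prm) : L :=
  match p with inl (inl (td, _)) => td.2 | inl (inr _) => 0 | inr _ => 0 end.
Definition valid (p : prm) : bool :=
  match p with
  | inl (inl (td, l)) => [&& td.2 \in K, td.2 != 0, (1 <= l)%N & (l <= e)%N]
  | inl (inr (_, l)) => (1 <= l)%N && (l <= e)%N
  | inr _ => true
  end.
Definition stab (p : prm) : {vspace L} := if p is inr _ then K else 1%VS.

Lemma baseG p : base p = G (tr_a p) (tr_s p) (tr_t p).
Proof.
case: p => [[[[t d] l]|[t l]]|[]] /=.
- by apply: image_sp_ext => u; rewrite /gfun; ring.
- by apply: image_sp_ext => u; rewrite /gfun; ring.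
- by rewrite G100.
Qed.

Lemma valid_tr p : valid p ->
  [/\ tr_s p \in K, tr_t p \in K, (1 <= tr_a p)%N, (tr_a p <= e)%N &
      tr_s p = 0 -> tr_t p = 0].
Proof.
case: p => [[[[t d] l]|[t l]]|[]] /=.
- case/and4P => dK dn l1 le; have [rK rn] := hrep t.
  by split; rewrite ?rpredM // => /eqP; rewrite mulf_eq0 (negbTE rn) (negbTE dn).
- case/andP => l1 le; have [rK rn] := hrep t.
  by split; rewrite ?rpred0 // => rt0; move: rn; rewrite rt0 eqxx.
- by move=> _; split => //; rewrite ?rpred0 ?e_ge1.
Qed.

Lemma powxi w : w \in K -> w != 0 -> exists m, w = xi ^+ m.
Proof.
move=> wK wn.
have qk0 : (0 < q ^ k)%N by rewrite expn_gt0 q_gt0.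
have E1 : w * w ^+ (q ^ k).-1 = w * 1.
  by rewrite mulr1 -exprS prednK //; apply/eqP; rewrite -hdK -memK.
have h := mulfI wn E1.
by have [i ->] := prim_rootP hprim h; exists i.
Qed.

Lemma rep_eq t t' w : w \in K -> w != 0 -> rep t' * w = rep t * w ^+ q ->
  t' = t /\ w \in 1%VS.
Proof.
move=> wK wn E.
have [rK rn] := hrep t.
have E' : rep t' = rep t * w ^+ q.-1.
  apply: (mulIf wn); rewrite E -mulrA -exprSr prednK //; exact: q_gt0.
have tt' : t' = t.
  case: (eqVneq t' t) => // ne; exfalso; apply: (hrepd ne).
  have [m wm] := powxi wK wn.
  by exists m; rewrite E' wm -exprM mulnC.
split => //; subst t'.
rewrite memF; apply/eqP; apply: (mulfI rn); by rewrite -E.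
Qed.

Lemma Core p p' (b b' : L) : valid p -> valid p' -> b != 0 -> b' != 0 ->
  (2 <= \dim (mulsp b (base p) :&: mulsp b' (base p')))%N ->
  p = p' /\ exists2 w, (w \in stab p) && (w != 0) & b' = b * w.
Proof.
move=> vp vp' bn bn' d2.
have [z1 [z2 [Z1 Z2 z2n z1n]]] := two_elems d2.
rewrite memv_cap in Z1; rewrite memv_cap in Z2; move: Z1 Z2 => /andP [Z1 Z1'] /andP [Z2 Z2'].
rewrite !baseG in Z1 Z1' Z2 Z2'.
have [sK tK a1 ae st] := valid_tr vp.
have [sK' tK' a1' ae' st'] := valid_tr vp'.
have ab : (tr_a p + tr_a p' < r)%N by apply: leq_ltn_trans (leq_add ae ae') e_bound.
have [hs hab [w [wK wn hsw hbw]]] :=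
  ML hmin a1 a1' ab sK tK sK' tK' st st' bn bn' Z1 Z2 Z1' Z2' z2n z1n.
clear d2 Z1 Z2 Z1' Z2' sK tK sK' tK' a1 a1' ae ae' st st' ab.
move: vp vp' hs hab hsw hbw.
case: p => [[[[t d] l]|[t l]]|[]]; case: p' => [[[[t' d'] l']|[t' l']]|[]] /= vp vp' hs hab hsw hbw.
- have [rK rn] := hrep t; case/and4P: vp => dK dn _ _.
  have [ll' dd'] := hab (mulf_neq0 rn dn); subst l' d'.
  have := @rep_eq t t' w wK wn.
  case.
    by apply: (mulIf dn); rewrite mulrAC hsw mulrAC.
  move=> tt' wF; subst t'; split => //; exists w => //; by rewrite wF.
- have [rK rn] := hrep t; case/and4P: vp => dK dn _ _.
  by have [_ d0] := hab (mulf_neq0 rn dn); move: dn; rewrite d0 eqxx.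
- have [rK rn] := hrep t; case/and4P: vp => dK dn _ _.
  by move: hs; rewrite eqxx mulf_eq0 (negbTE rn) (negbTE dn).
- have [rK rn] := hrep t; case/and4P: vp' => dK dn _ _.
  by have [_ d0] := hab rn; move: dn; rewrite -d0 eqxx.
- have [rK rn] := hrep t.
  have [ll' _] := hab rn; subst l'.
  have := @rep_eq t t' w wK wn.
  case; first exact: hsw.
  move=> tt' wF; subst t'; split => //; exists w => //; by rewrite wF.
- have [rK rn] := hrep t.
  by move: hs; rewrite eqxx (negbTE rn).
- have [rK rn] := hrep t'; case/and4P: vp' => dK dn _ _.
  by move: hs; rewrite eqxx mulf_eq0 (negbTE rn) (negbTE dn).
- have [rK rn] := hrep t'.
  by move: hs; rewrite eqxx (negbTE rn).
- split => //; exists w => //; by rewrite wK.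
Qed.

Lemma stab_fix p w : w \in stab p -> w != 0 -> mulsp w (base p) = base p.
Proof.
case: p => [p|[]] /= wS wn; first exact: mulsp_stab.
exact: mulsp_stabK.
Qed.

Lemma Core_eq p p' (b b' : L) : valid p -> valid p' -> b != 0 -> b' != 0 ->
  (2 <= \dim (mulsp b (base p) :&: mulsp b' (base p')))%N ->
  p = p' /\ mulsp b (base p) = mulsp b' (base p').
Proof.
move=> vp vp' bn bn' d2; have [pp' [w /andP [wS wn] ->]] := Core vp vp' bn bn' d2.
subst p'; split => //; by rewrite -mulspM (stab_fix wS wn).
Qed.

Lemma dim_base p : valid p -> \dim (base p) = k.
Proof.
move=> vp; have [sK tK a1 ae _] := valid_tr vp.
rewrite baseG (dim_gsp hmin) // -?hdK //.
by apply: leq_ltn_trans (leq_add ae ae) e_bound.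
Qed.

Definition TD := [seq (t, d) | t <- enum 'I_(q.-1), d <- nzelems K].
Definition PU := [seq (td, l) | td <- TD, l <- iota 1 e].
Definition PV := [seq (t, l) | t <- enum 'I_(q.-1), l <- iota 1 e].
Definition ps : seq prm :=
  [seq inl (inl x) | x <- PU] ++ [seq inl (inr x) | x <- PV] ++ [:: inr tt].
Definition ob p := orbit_sp (base p).

Lemma codeE : code1 K gamma rep e ++ code2 K gamma rep e ++ code3 K =
  flatten (map ob ps).
Proof.
have h1 : code1 K gamma rep e = flatten [seq ob (inl (inl x)) | x <- PU].
  by rewrite /code1 /PU [in RHS]map_allpairs.
have h2 : code2 K gamma rep e = flatten [seq ob (inl (inr x)) | x <- PV].
  by rewrite /code2 /PV [in RHS]map_allpairs.
rewrite h1 h2 /ps !map_cat !flatten_cat -!map_comp /= cats0; by [].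
Qed.

Lemma ps_valid p : p \in ps -> valid p.
Proof.
rewrite /ps !mem_cat => /or3P [/mapP [x xPU ->] | /mapP [x xPV ->] | ]; last by rewrite inE => /eqP ->.
- move: xPU => /allpairsP [[td l] /= [tdTD lI ->]] /=.
  move: tdTD => /allpairsP [[t d] /= [_ dN ->]] /=.
  move: dN lI; rewrite /nzelems mem_filter mem_iota => /andP [/andP [-> ->] _] /=.
  by rewrite add1n ltnS.
- move: xPV => /allpairsP [[t l] /= [_ lI ->]] /=.
  by move: lI; rewrite mem_iota add1n ltnS.
Qed.

Lemma ps_uniq : uniq ps.
Proof.
have uTD : uniq TD.
  apply: allpairs_uniq; first exact: enum_uniq.
    exact: (filter_uniq _ (@enum_uniq (finvect_type L) (finvect_type L))).
  by move=> [a b] [c d] _ _ /=.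
have uPU : uniq PU.
  apply: allpairs_uniq; rewrite ?iota_uniq //.
  by move=> [a b] [c d] _ _ /=.
have uPV : uniq PV.
  apply: allpairs_uniq; rewrite ?iota_uniq ?enum_uniq //.
  by move=> [a b] [c d] _ _ /=.
rewrite /ps cat_uniq; apply/and3P; split.
- by rewrite map_inj_uniq // => x y [].
- apply/hasPn => z; rewrite mem_cat => /orP [/mapP [x _ ->] | ]; last by rewrite inE => /eqP ->; apply/mapP => [[y _]].
  by apply/mapP => [[y _]].
- rewrite cat_uniq; apply/and3P; split => //.
  + by rewrite map_inj_uniq // => x y [].
  + by apply/hasPn => z; rewrite inE => /eqP ->; apply/mapP => [[y _]].
Qed.

Local Notation CC := (undup (flatten (map ob ps))).

Lemma memC V : V \in CC -> exists p b, [/\ p \in ps, b != 0 & V = mulsp b (base p)].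
Proof.
rewrite mem_undup => /flattenP [s /mapP [p pps ->]] /mapP [b].
by rewrite mem_filter => /andP [bn _] ->; exists p, b.
Qed.

Lemma inC p b : p \in ps -> b != 0 -> mulsp b (base p) \in CC.
Proof.
move=> pps bn; rewrite mem_undup; apply/flattenP; exists (ob p); first exact: map_f.
by apply: map_f; rewrite mem_filter bn mem_elems.
Qed.

Lemma C_cyclic : cyclic_code CC.
Proof.
move=> V a /memC [p [b [pps bn ->]]] an.
by rewrite mulspM; apply: inC; rewrite // mulf_neq0.
Qed.

Lemma C_dim : const_dim_code CC k.
Proof.
move=> V /memC [p [b [pps bn ->]]].
by rewrite dim_mulsp // dim_base // ps_valid.
Qed.

Lemma C_cap U V : U \in CC -> V \in CC -> U != V -> (\dim (U :&: V) <= 1)%N.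
Proof.
move=> /memC [p [b [pps bn ->]]] /memC [p' [b' [pps' bn' ->]]] UV.
rewrite leqNgt; apply/negP => d2.
have [_ E] := Core_eq (ps_valid pps) (ps_valid pps') bn bn' d2.
by rewrite E eqxx in UV.
Qed.

Lemma orbit_size p : valid p ->
  (size (undup (ob p)) * (q ^ \dim (stab p)).-1 = (q ^ (r * k)).-1)%N.
Proof.
move=> vp; rewrite /ob /orbit_sp undup_map_size.
  rewrite size_filter count_elems -hdL -card_nz.
  by apply: eq_card => y; rewrite !inE memvf.
move=> x; rewrite mem_filter => /andP [xn _].
rewrite count_filter count_elems -card_nz.
have inj : injective (fun w : finvect_type L => (x * w : finvect_type L)) by exact: mulfI xn.
rewrite -(card_image inj [pred w : finvect_type L | (w \in stab p) && (w != 0)]).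
apply: eq_card => y; rewrite !inE; apply/andP/imageP.
  case=> /eqP E yn.
  have E' : @mulsp F L y (base p) = mulsp x (base p) := E.
  have d2 : (2 <= \dim (mulsp x (base p) :&: @mulsp F L y (base p)))%N.
    by rewrite E' capvv dim_mulsp // dim_base.
  have [_ [w wA yE]] := Core vp vp xn yn d2.
  by exists w.
case=> w; rewrite inE => /andP [wS wn] ->; split; last by rewrite mulf_neq0.
by rewrite -mulspM (stab_fix wS wn).
Qed.

Lemma q_gt1 : (1 < q)%N.
Proof. exact: finNzRing_gt1. Qed.

Definition t0 : 'I_(q.-1) := Ordinal (ltac:(by have := q_gt1; case: q => [|[|n]])  : (0 < q.-1)%N).

Lemma arith (A B Q e' D N M : nat) : (D * A = N)%N -> Q = B.+1 ->
  ((A * B * e') * D + (A * e') * D + (M + 0) = e' * Q * N + M)%N.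
Proof. move=> <- ->; ring. Qed.

Lemma C_size : size CC =
  (e * q ^ k * (q ^ (r * k) - 1) + (q ^ (r * k) - 1) %/ (q ^ k - 1))%N.
Proof.
rewrite size_undup_flatten ?ps_uniq //; last first.
  move=> p p' X pps pps' /mapP [b]; rewrite mem_filter => /andP [bn _] Xe.
  move=> /mapP [b']; rewrite mem_filter => /andP [bn' _] Xe'.
  have d2 : (2 <= \dim (mulsp b (base p) :&: mulsp b' (base p')))%N.
    by rewrite -Xe -Xe' capvv Xe dim_mulsp // dim_base // ps_valid.
  by have [] := Core_eq (ps_valid pps) (ps_valid pps') bn bn' d2.
set N := (q ^ (r * k)).-1.
have pos d : (0 < d)%N -> (0 < (q ^ d).-1)%N.
  by move=> d0; rewrite ltn_predRL -{1}(exp1n d) ltn_exp2r // q_gt1.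
have dS p : (0 < \dim (stab p))%N.
  by case: p => [p|[]] /=; rewrite ?dimv1 ?hdK //; apply: ltnW.
have osz p : p \in ps -> size (undup (ob p)) = (N %/ (q ^ \dim (stab p)).-1)%N.
  by move=> pps; rewrite /N -(orbit_size (ps_valid pps)) mulnK // pos.
have -> : [seq size (undup (ob p)) | p <- ps] = [seq (N %/ (q ^ \dim (stab p)).-1)%N | p <- ps].
  by apply/eq_in_map => p /osz.
have hU : sumn [seq (N %/ (q ^ \dim (stab p)).-1)%N | p <- [seq inl (inl x) | x <- PU]] =
    (size PU * (N %/ q.-1))%N.
  by rewrite -map_comp -(sumn_const PU); congr sumn; apply/eq_map => x; rewrite /= dimv1 expn1.
have hV : sumn [seq (N %/ (q ^ \dim (stab p)).-1)%N | p <- [seq inl (inr x) | x <- PV]] =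
    (size PV * (N %/ q.-1))%N.
  by rewrite -map_comp -(sumn_const PV); congr sumn; apply/eq_map => x; rewrite /= dimv1 expn1.
rewrite /ps !map_cat !sumn_cat hU hV /= hdK.
rewrite /PU /PV !size_allpairs size_iota size_enum_ord /nzelems size_filter count_elems card_nz hdK.
rewrite !subn1.
have vp0 : valid (inl (inr (t0, 1%N))) by rewrite /= e_ge1.
have hD : (N %/ q.-1 * q.-1 = N)%N.
  by have := orbit_size vp0; rewrite /N /= dimv1 expn1 => <-; rewrite mulnK // -(expn1 q) pos.
rewrite addnA; apply: arith => //; by rewrite prednK // expn_gt0 q_gt0.
Qed.


Lemma pair_dist p p' (x : L) : p \in ps -> p' \in ps -> p != p' -> x != 0 ->
  x \in base p -> x \in base p' ->
  exists U V, [/\ U \in CC, V \in CC, U != V & sdist U V = (2 * k - 2)%N].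
Proof.
move=> pps pps' pp' xn xp xp'.
have vp := ps_valid pps; have vp' := ps_valid pps'.
have on : (1 : L) != 0 := oner_neq0 L.
exists (mulsp 1 (base p)), (mulsp 1 (base p')).
have UV : mulsp 1 (base p) != mulsp 1 (base p').
  apply/negP => /eqP E.
  have d2 : (2 <= \dim (mulsp 1 (base p) :&: mulsp 1 (base p')))%N.
    by rewrite E capvv dim_mulsp // dim_base.
  by have [pe _] := Core_eq vp vp' on on d2; rewrite pe eqxx in pp'.
have CU := inC pps on; have CV := inC pps' on.
split => //.
have le1 := C_cap CU CV UV.
have ge1 : (0 < \dim (mulsp 1 (base p) :&: mulsp 1 (base p')))%N.
  rewrite lt0n dimv_eq0; apply/negP => /eqP E0.
  have : x \in (mulsp 1 (base p) :&: mulsp 1 (base p'))%VS by rewrite memv_cap !mulsp1 xp xp'.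
  by rewrite E0 memv0 (negbTE xn).
rewrite /sdist !dim_mulsp // !dim_base //.
have -> : \dim (mulsp 1 (base p) :&: mulsp 1 (base p')) = 1%N by apply/eqP; rewrite eqn_leq le1 ge1.
by rewrite muln1 mul2n addnn.
Qed.

Lemma inPU t d l : d \in K -> d != 0 -> (1 <= l <= e)%N ->
  (inl (inl ((t, d), l)) : prm) \in ps.
Proof.
move=> dK dn hl; rewrite /ps mem_cat; apply/orP; left; apply: map_f.
apply/allpairsP; exists ((t, d), l); split => //; last by rewrite mem_iota add1n ltnS.
apply/allpairsP; exists (t, d); split => //; first by rewrite mem_enum.
by rewrite /nzelems mem_filter dK dn mem_elems.
Qed.

Lemma inPV t l : (1 <= l <= e)%N -> (inl (inr (t, l)) : prm) \in ps.
Proof.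
move=> hl; rewrite /ps !mem_cat; apply/orP; right; apply/orP; left; apply: map_f.
apply/allpairsP; exists (t, l); split => //; first by rewrite mem_enum.
by rewrite mem_iota add1n ltnS.
Qed.

Lemma inPK : (inr tt : prm) \in ps.
Proof. by rewrite /ps !mem_cat mem_seq1 eqxx !orbT. Qed.

Lemma C_mindist : min_dist CC (2 * k - 2)%N.
Proof.
split.
  move=> U V CU CV UV; have le1 := C_cap CU CV UV.
  have [p [b [pps bn UE]]] := memC CU.
  have [p' [b' [pps' bn' VE]]] := memC CV.
  rewrite /sdist UE VE !dim_mulsp // !dim_base ?ps_valid // -UE -VE.
  by move: le1; move: (\dim (U :&: V)) => dd hd; clear -hd; lia.
have hl : (1 <= 1 <= e)%N by rewrite e_ge1.
have [rK rn] := hrep t0.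
case: (eqVneq (rep t0 + 1) 0) => [h | h].
  apply: (@pair_dist (inl (inl ((t0, 1), 1%N))) (inr tt) 1) => //.
  - by apply: inPU; rewrite ?mem1v ?oner_neq0.
  - exact: inPK.
  - exact: oner_neq0.
  - rewrite baseG; apply/mem_gsp; exists 1; rewrite ?mem1v //=.
    by rewrite /gfun !expr1n !mulr1 h mul0r addr0.
  - by rewrite /= mem1v.
pose d := rep t0 / (rep t0 + 1).
have dK : d \in K by rewrite rpredM ?rpredV ?rpredD ?mem1v.
have dn : d != 0 by rewrite mulf_neq0 ?invr_eq0.
apply: (@pair_dist (inl (inl ((t0, d), 1%N))) (inl (inr (t0, 1%N))) (1 + rep t0 * gamma)) => //.
- exact: inPU.
- exact: inPV.
- apply/eqP => E.
  have := @IL F L K r gamma hmin 1 (rep t0) 0 0 1 1 (mem1v K) rK (rpred0 K) (rpred0 K) isT isT.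
  case; first by apply: leq_ltn_trans (leq_add e_ge1 e_ge1) e_bound.
    by rewrite !mul0r !addr0 expr1.
  by move=> /eqP; rewrite oner_eq0.
- rewrite baseG; apply/mem_gsp; exists 1; rewrite ?mem1v //=.
  rewrite /gfun !expr1n !mulr1 expr1; congr (_ + _ * _).
  by rewrite /d; field.
- rewrite baseG; apply/mem_gsp; exists 1; rewrite ?mem1v //=.
  by rewrite /gfun !expr1n !mulr1 addr0 expr1.
Qed.


End Code.

Unset Implicit Arguments.
Set Strict Implicit.

Theorem theorem3p4 (F : finFieldType) (L : fieldExtType F) (K : {subfield L})
    (k r : nat) (xi gamma : L) (rep : 'I_(#|F|.-1) -> L) :
  (2 <= k)%N -> (2 < r)%N ->
  \dim K = k -> \dim {: L}%VS = (r * k)%N ->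
  xi \in K -> (#|F| ^ k).-1.-primitive_root xi ->
  (forall t, rep t \in K /\ rep t != 0) ->
  (forall t s, t != s -> ~ exists m : nat, rep t = rep s * xi ^+ (#|F|.-1 * m)) ->
  size (minPoly K gamma) = r.+1 ->
  let q := #|F| in
  let n := (r * k)%N in
  let e := (uphalf r).-1 in
  let C := undup (code1 K gamma rep e ++ code2 K gamma rep e ++ code3 K) in
  [/\ cyclic_code C, const_dim_code C k,
      size C = (e * q ^ k * (q ^ n - 1) + (q ^ n - 1) %/ (q ^ k - 1))%N
    & min_dist C (2 * k - 2)%N].
Proof.
move=> hk hr hdK hdL hxi hprim hrep hrepd hmin q n e C.
rewrite /C /e codeE; split.
- exact: C_cyclic.
- by apply: (@C_dim F L K k r xi gamma rep).
- by apply: (@C_size F L K k r xi gamma rep).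
- by apply: (@C_mindist F L K k r xi gamma rep).
Qed.
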